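(* Let $m\geq2$. For every $i=1,\dots,m-1$, $$s^{(m)}_{i,p}\,(M^{(m)}_{i,p})^{\frac{p-1}{2}}\to0\quad\text{and consequently}\quad r^{(m)}_{i,p}\,(M^{(m)}_{i,p})^{\frac{p-1}{2}}\to0\qquad\text{as }p\to p_S^-.$$
   Context: Standing setting: $N\geq3$, $B$ unit ball of $\mathbb{R}^N$ centered at $0$, $p_S=\frac{N+2}{N-2}$. $u^{(m)}_p$ is the unique radial solution of $-\Delta u=|u|^{p-1}u$ in $B$, $u=0$ on $\partial B$, with exactly $m$ nodal regions and $u^{(m)}_p(0)>0$. Nodal radii $0<r^{(m)}_{1,p}<\dots<r^{(m)}_{m-1,p}<r^{(m)}_{m,p}:=1$; $s^{(m)}_{i,p}\in(r^{(m)}_{i,p},r^{(m)}_{i+1,p})$ is the unique critical point of $r\mapsto u^{(m)}_p(r)$ there; $M^{(m)}_{i,p}=|u^{(m)}_p(s^{(m)}_{i,p})|$. *)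

(* Defs.v *)
From Stdlib Require Import Reals Lra.
Open Scope R_scope.

Definition pS (N : nat) : R := (INR N + 2) / (INR N - 2).

Definition nl (p t : R) : R :=
  if Req_EM_T t 0 then 0 else Rpower (Rabs t) (p - 1) * t.

(* u is the (evenly extended) radial profile of a classical radial solution
   of -Δu = |u|^{p-1}u in the unit ball of R^N, u = 0 on the boundary:
   u is C^2 on (-1,1) (with derivatives u1, u2), even, satisfies the radial
   ODE u'' + (N-1)/r u' + |u|^{p-1}u = 0 on (0,1), is continuous on [0,1]
   and vanishes at r = 1. *)
Definition radial_sol (N : nat) (p : R) (u u1 u2 : R -> R) : Prop :=
  (forall r, -1 < r < 1 -> u (- r) = u r) /\
  (forall r, -1 < r < 1 -> derivable_pt_lim u r (u1 r)) /\
  (forall r, -1 < r < 1 -> derivable_pt_lim u1 r (u2 r)) /\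
  (forall r, -1 < r < 1 -> continuity_pt u2 r) /\
  (forall r, 0 < r < 1 -> u2 r + (INR N - 1) / r * u1 r + nl p (u r) = 0) /\
  (forall eps, 0 < eps -> exists delta, 0 < delta /\
      forall r, 1 - delta < r < 1 -> Rabs (u r) < eps) /\
  u 1 = 0.

(* u has exactly m nodal regions, u(0) > 0, and rad i (1 <= i <= m-1) are
   its nodal radii in increasing order, rad m = 1. *)
Definition nodal_radii (m : nat) (u : R -> R) (rad : nat -> R) : Prop :=
  0 < u 0 /\
  rad m = 1 /\
  (forall i, (1 <= i <= m - 1)%nat -> 0 < rad i < 1 /\ u (rad i) = 0) /\
  (forall i, (1 <= i < m)%nat -> rad i < rad (S i)) /\
  (forall t, 0 <= t < 1 -> u t = 0 ->
      exists i, (1 <= i <= m - 1)%nat /\ t = rad i).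

Definition crit_points (m : nat) (u1 : R -> R) (rad s : nat -> R) : Prop :=
  forall i, (1 <= i <= m - 1)%nat ->
    rad i < s i < rad (S i) /\ u1 (s i) = 0 /\
    (forall t, rad i < t < rad (S i) -> u1 t = 0 -> t = s i).

Definition tends_to_0_left (f : R -> R) (p0 : R) : Prop :=
  forall eps, 0 < eps -> exists delta, 0 < delta /\
    forall p, 1 < p -> p0 - delta < p < p0 -> Rabs (f p) < eps.

(* Main.v *)
Require Import Defs.
From Stdlib Require Import Reals Lra Lia Psatz Ranalysis5.
From Coquelicot Require Import Coquelicot.
Open Scope R_scope.

Lemma deriv_neg_sides (g : R -> R) (y l : R) :
  derivable_pt_lim g y l -> l < 0 ->
  exists d, 0 < d /\ forall h, 0 < h < d -> g (y + h) < g y /\ g y < g (y - h).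
Proof.
  intros Hd Hl.
  destruct (Hd (- l / 2)) as [d Hdd]; [lra|].
  exists d; split; [apply cond_pos|].
  intros h Hh. split.
  - assert (Hx := Hdd h ltac:(lra) ltac:(rewrite Rabs_right; lra)).
    apply Rabs_def2 in Hx. destruct Hx as [Hx1 Hx2].
    assert (Hq: (g (y + h) - g y) / h < 0) by lra.
    assert (0 < h) by lra.
    destruct (Rlt_or_le (g (y+h)) (g y)) as [|Hc]; [assumption|].
    exfalso. assert (0 <= (g (y + h) - g y) / h).
    { unfold Rdiv. apply Rmult_le_pos; [lra|]. left; apply Rinv_0_lt_compat; lra. }
    lra.
  - assert (Hx := Hdd (-h) ltac:(lra) ltac:(rewrite Rabs_left; lra)).
    apply Rabs_def2 in Hx. destruct Hx as [Hx1 Hx2].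
    replace (y + - h) with (y - h) in * by ring.
    destruct (Rlt_or_le (g y) (g (y-h))) as [|Hc]; [assumption|].
    exfalso. assert (0 <= (g (y - h) - g y) / - h).
    { unfold Rdiv. replace ((g (y - h) - g y) * / - h) with ((g y - g (y-h)) * / h)
        by (field; lra).
      apply Rmult_le_pos; [lra|]. left; apply Rinv_0_lt_compat; lra. }
    lra.
Qed.

Lemma ivt_gen (f : R -> R) (a b : R) :
  a <= b -> (forall x, a <= x <= b -> continuity_pt f x) ->
  f a * f b <= 0 -> exists z, a <= z <= b /\ f z = 0.
Proof.
  intros Hab Hc Hs.
  destruct (Req_dec (f a) 0) as [Ha|Ha]; [exists a; split; [lra|auto]|].
  destruct (Req_dec (f b) 0) as [Hb|Hb]; [exists b; split; [lra|auto]|].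
  destruct (Rle_lt_or_eq_dec a b Hab) as [Hlt|Heq]; [|subst; nra].
  destruct (Rlt_or_le (f a) 0) as [Hn|Hp].
  - assert (0 < f b) by nra.
    destruct (IVT_interv f a b Hc Hlt Hn H) as [z Hz]. exists z; tauto.
  - assert (0 < f a) by lra. assert (f b < 0) by nra.
    destruct (IVT_interv (fun x => - f x) a b) as [z Hz]; auto.
    + intros x Hx. apply continuity_pt_opp. auto.
    + lra.
    + lra.
    + exists z. split; [tauto|]. lra.
Qed.

Lemma mvt_le (G G' : R -> R) (a b : R) :
  a <= b -> (forall x, a <= x <= b -> derivable_pt_lim G x (G' x)) ->
  (forall x, a < x < b -> G' x <= 0) -> G b <= G a.
Proof.
  intros Hab Hd Hn.
  destruct (Rle_lt_or_eq_dec a b Hab) as [Hlt|Heq]; [|subst; lra].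
  destruct (MVT_cor2 G G' a b Hlt Hd) as [c [Hc1 Hc2]].
  assert (G' c * (b - a) <= 0).
  { assert (G' c <= 0) by (apply Hn; auto). nra. }
  lra.
Qed.

Lemma dcont (g g' : R -> R) (a b : R) :
  (forall x, a <= x <= b -> derivable_pt_lim g x (g' x)) ->
  forall x, a <= x <= b -> continuity_pt g x.
Proof.
  intros Hd x Hx. apply derivable_continuous_pt. exists (g' x). apply Hd; auto.
Qed.

Lemma sign_persist (g g' : R -> R) (x0 x1 : R) :
  x0 < x1 ->
  (forall x, x0 <= x <= x1 -> derivable_pt_lim g x (g' x)) ->
  (forall x, x0 <= x <= x1 -> g x = 0 -> g' x < 0) ->
  g x0 <= 0 -> g x1 < 0.
Proof.
  intros Hlt Hd Htr H0.
  assert (Hc := dcont g g' x0 x1 Hd).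
  destruct (Rlt_or_le (g x1) 0) as [|H1]; [assumption|exfalso].
  assert (exists x1', x0 < x1' <= x1 /\ 0 < g x1') as [x1' [Hx1' Hg1']].
  { destruct (Rle_lt_or_eq_dec 0 (g x1) H1) as [Hp|Hz].
    - exists x1; split; [lra|auto].
    - destruct (deriv_neg_sides g x1 (g' x1) (Hd x1 ltac:(lra))
                  (Htr x1 ltac:(lra) ltac:(auto))) as [d [Hd0 Hdd]].
      set (h := Rmin (d/2) ((x1 - x0)/2)).
      assert (0 < h < d).
      { unfold h. split; [apply Rmin_pos; lra|].
        eapply Rle_lt_trans; [apply Rmin_l|lra]. }
      assert (h <= (x1-x0)/2) by (unfold h; apply Rmin_r).
      exists (x1 - h). split; [lra|]. destruct (Hdd h H) as [_ Hh]. lra. }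
  set (E := fun x => x0 <= x <= x1' /\ g x = 0).
  assert (HE : exists x, E x).
  { destruct (ivt_gen g x0 x1') as [z Hz]; try lra.
    - intros; apply Hc; lra.
    - nra.
    - exists z; unfold E; tauto. }
  assert (HB : bound E) by (exists x1'; intros x [Hx _]; lra).
  destruct (completeness E HB HE) as [y [Hub Hlub]].
  assert (Hy0 : x0 <= y).
  { destruct HE as [z Hz]. apply Rle_trans with z; [unfold E in Hz; lra|]. apply Hub; auto. }
  assert (Hy1 : y <= x1') by (apply Hlub; intros x [Hx _]; lra).
  assert (Hgy : g y = 0).
  { destruct (Req_dec (g y) 0) as [|Hne]; [auto|exfalso].
    assert (Hcy := Hc y ltac:(lra)).
    destruct (Hcy (Rabs (g y)) ltac:(apply Rabs_pos_lt; auto)) as [d [Hd0 Hdd]].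
    assert (Hub' : is_upper_bound E (y - d/2)).
    { intros x Hx. destruct (Rle_or_lt x (y - d/2)) as [|Hxl]; [auto|exfalso].
      assert (x <= y) by (apply Hub; auto).
      destruct Hx as [Hx Hgx].
      destruct (Req_dec x y) as [->|Hxy]; [contradiction|].
      assert (Hh := Hdd x). simpl in Hh. unfold Rdist in Hh.
      rewrite Hgx in Hh.
      assert (Rabs (0 - g y) < Rabs (g y)).
      { apply Hh. split. { unfold D_x, no_cond. split; auto. }
        rewrite Rabs_left; lra. }
      idtac "HERE"; lazymatch goal with H : Rabs (0 - g y) < _ |- _ => rewrite Rminus_0_l, Rabs_Ropp in H end; lra. }
    assert (y <= y - d/2) by (apply Hlub; auto). lra. }
  assert (Hy1s : y < x1') by (destruct (Req_dec y x1'); [subst; lra|lra]).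
  assert (Hpos : forall x, y < x <= x1' -> 0 < g x).
  { intros x Hx. destruct (Rlt_or_le 0 (g x)) as [|Hle]; [auto|exfalso].
    destruct (ivt_gen g x x1') as [z [Hz Hgz]]; try lra.
    - intros; apply Hc; lra.
    - nra.
    - assert (z <= y) by (apply Hub; unfold E; split; [lra|auto]). lra. }
  destruct (deriv_neg_sides g y (g' y) (Hd y ltac:(lra)) (Htr y ltac:(lra) Hgy))
    as [d [Hd0 Hdd]].
  set (h := Rmin (d/2) ((x1' - y)/2)).
  assert (0 < h < d).
  { unfold h. split; [apply Rmin_pos; lra|]. eapply Rle_lt_trans; [apply Rmin_l|lra]. }
  assert (h <= (x1'-y)/2) by (unfold h; apply Rmin_r).
  destruct (Hdd h H) as [Hh _].
  assert (0 < g (y + h)) by (apply Hpos; lra). lra.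
Qed.

Lemma const_sign (f : R -> R) (a b : R) :
  (forall x, a < x < b -> continuity_pt f x) ->
  (forall x, a < x < b -> f x <> 0) ->
  forall x y, a < x < b -> a < y < b -> 0 < f x * f y.
Proof.
  intros Hc Hz x y Hx Hy.
  destruct (Rlt_or_le 0 (f x * f y)) as [|Hle]; [auto|exfalso].
  destruct (Rle_or_lt x y) as [Hxy|Hxy].
  - destruct (ivt_gen f x y Hxy) as [z [Hz1 Hz2]].
    + intros; apply Hc; lra.
    + auto.
    + apply (Hz z); [lra|auto].
  - destruct (ivt_gen f y x) as [z [Hz1 Hz2]]; [lra| |nra|].
    + intros; apply Hc; lra.
    + apply (Hz z); [lra|auto].
Qed.

Definition Fp (p x : R) : R := x * nl p x / (p + 1).

Lemma nl_0 p : nl p 0 = 0.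
Proof. unfold nl. destruct (Req_EM_T 0 0); [auto|lra]. Qed.

Lemma nl_nz p x : x <> 0 -> nl p x = exp ((p-1) * ln (Rabs x)) * x.
Proof. intros H. unfold nl. destruct (Req_EM_T x 0); [lra|]. unfold Rpower. auto. Qed.

Lemma nl_scale p k x : nl p (exp k * x) = exp (p * k) * nl p x.
Proof.
  destruct (Req_dec x 0) as [->|Hx].
  - rewrite Rmult_0_r, !nl_0. ring.
  - assert (exp k * x <> 0) by (apply Rmult_integral_contrapositive; split; auto;
       apply Rgt_not_eq, exp_pos).
    rewrite !nl_nz by auto.
    rewrite Rabs_mult, (Rabs_right (exp k)) by (left; apply exp_pos).
    rewrite ln_mult by (try apply exp_pos; apply Rabs_pos_lt; auto).
    rewrite ln_exp.
    replace ((p - 1) * (k + ln (Rabs x))) with ((p-1)*k + (p-1) * ln (Rabs x)) by ring.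
    rewrite exp_plus.
    replace (p * k) with ((p-1)*k + k) by ring. rewrite exp_plus. ring.
Qed.

Lemma nl_small p x : 1 <= p -> Rabs x <= 1 -> Rabs (nl p x) <= Rabs x.
Proof.
  intros Hp Hx. destruct (Req_dec x 0) as [->|Hx0].
  - rewrite nl_0. lra.
  - rewrite nl_nz by auto. rewrite Rabs_mult, (Rabs_right (exp _)) by (left; apply exp_pos).
    assert (ln (Rabs x) <= 0).
    { rewrite <- ln_1. destruct (Rle_lt_or_eq_dec _ _ Hx) as [Hl|He].
      - left. apply ln_increasing; [apply Rabs_pos_lt; auto|auto].
      - rewrite He; lra. }
    assert (exp ((p - 1) * ln (Rabs x)) <= 1).
    { assert (Hq : (p - 1) * ln (Rabs x) <= 0) by nra.
      rewrite <- exp_0 at 2.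
      destruct (Rle_lt_or_eq_dec _ _ Hq) as [Hl|He].
      - left; apply exp_increasing; auto.
      - rewrite He; lra. }
    assert (0 <= Rabs x) by apply Rabs_pos. nra.
Qed.

Lemma Fp_nonneg p x : 1 < p -> 0 <= Fp p x.
Proof.
  intros Hp. unfold Fp. destruct (Req_dec x 0) as [->|Hx].
  - rewrite nl_0. unfold Rdiv. rewrite !Rmult_0_l. lra.
  - rewrite nl_nz by auto.
    assert (0 < exp ((p - 1) * ln (Rabs x))) by apply exp_pos.
    apply Rmult_le_pos; [|left; apply Rinv_0_lt_compat; lra].
    replace (x * (exp ((p - 1) * ln (Rabs x)) * x)) with (exp ((p - 1) * ln (Rabs x)) * (x*x)) by ring.
    apply Rmult_le_pos; [lra|]. nra.
Qed.

Lemma Fp_deriv p x : 1 < p -> derivable_pt_lim (Fp p) x (nl p x).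
Proof.
  intros Hp.
  destruct (Rtotal_order x 0) as [Hx|[Hx|Hx]].
  - apply (derivable_pt_lim_locally_ext (fun y => exp((p-1)*ln (-y)) * y * y / (p+1))
             _ x (2*x) 0); [lra| |].
    + intros z Hz. unfold Fp. rewrite nl_nz by lra. rewrite Rabs_left by lra. field. lra.
    + apply is_derive_Reals. auto_derive; [lra|].
      rewrite nl_nz by lra. rewrite Rabs_left by lra. field. lra.
  - subst x. rewrite nl_0. intros eps Heps.
    assert (0 < Rmin 1 eps) by (apply Rmin_pos; lra).
    exists (mkposreal _ H). simpl. intros h Hh Hlt.
    unfold Fp. rewrite nl_0, Rplus_0_l.
    replace ((h * nl p h / (p + 1) - 0 * 0 / (p + 1)) / h - 0) with (nl p h * / (p+1)) by (field; lra).
    assert (Rabs h <= 1) by (left; eapply Rlt_le_trans; [exact Hlt|apply Rmin_l]).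
    assert (Rabs h < eps) by (eapply Rlt_le_trans; [exact Hlt|apply Rmin_r]).
    assert (Rabs (nl p h) <= Rabs h) by (apply nl_small; lra).
    rewrite Rabs_mult, (Rabs_right (/ (p+1))) by (left; apply Rinv_0_lt_compat; lra).
    assert (/ (p+1) < 1) by (rewrite <- Rinv_1; apply Rinv_lt_contravar; lra).
    assert (0 < / (p+1)) by (apply Rinv_0_lt_compat; lra).
    assert (0 <= Rabs (nl p h)) by apply Rabs_pos. nra.
  - apply (derivable_pt_lim_locally_ext (fun y => exp((p-1)*ln y) * y * y / (p+1))
             _ x 0 (2*x)); [lra| |].
    + intros z Hz. unfold Fp. rewrite nl_nz by lra. rewrite Rabs_right by lra. field. lra.
    + apply is_derive_Reals. auto_derive; [lra|].
      rewrite nl_nz by lra. rewrite Rabs_right by lra. field. lra.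
Qed.

Lemma dmul f g x df dg : derivable_pt_lim f x df -> derivable_pt_lim g x dg ->
  derivable_pt_lim (fun y => f y * g y) x (df * g x + f x * dg).
Proof. intros; apply (derivable_pt_lim_mult f g); auto. Qed.
Lemma dplus f g x df dg : derivable_pt_lim f x df -> derivable_pt_lim g x dg ->
  derivable_pt_lim (fun y => f y + g y) x (df + dg).
Proof. intros; apply (derivable_pt_lim_plus f g); auto. Qed.
Lemma dcomp f g x df dg : derivable_pt_lim g x dg -> derivable_pt_lim f (g x) df ->
  derivable_pt_lim (fun y => f (g y)) x (df * dg).
Proof. intros; apply (derivable_pt_lim_comp g f); auto. Qed.
Lemma dconst k x : derivable_pt_lim (fun _ => k) x 0.
Proof. apply derivable_pt_lim_const. Qed.
Lemma did x : derivable_pt_lim (fun y => y) x 1.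
Proof. apply derivable_pt_lim_id. Qed.
Lemma deq f x l l' : derivable_pt_lim f x l -> l = l' -> derivable_pt_lim f x l'.
Proof. intros H ->; auto. Qed.
Lemma dexpk k x : derivable_pt_lim (fun t => exp (k * t)) x (k * exp (k * x)).
Proof.
  eapply deq. apply (dcomp exp (fun t => k * t)).
  - eapply deq. apply (dmul (fun _ => k) (fun t => t)); [apply dconst|apply did]. reflexivity.
  - apply derivable_pt_lim_exp.
  - cbv beta; ring.
Qed.

Definition cc (p : R) : R := 2 / (p - 1).
Definition vv (p : R) (u : R -> R) (t : R) : R := exp (cc p * t) * u (exp t).
Definition ww (p : R) (u u1 : R -> R) (t : R) : R :=
  exp (cc p * t) * (cc p * u (exp t) + exp t * u1 (exp t)).
Definition bb (N : nat) (p : R) : R := cc p * (INR N - 2 - cc p).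
Definition AA (N : nat) (p : R) : R := 2 * cc p + 2 - INR N.
Definition HH (N : nat) (p : R) (u u1 : R -> R) (t : R) : R :=
  (ww p u u1 t)^2/2 - bb N p * (vv p u t)^2/2 + Fp p (vv p u t).
Definition Wd (N : nat) (p : R) (u u1 : R -> R) (t : R) : R :=
  AA N p * ww p u u1 t + bb N p * vv p u t - nl p (vv p u t).

Lemma exp_lt1 t : t < 0 -> 0 < exp t < 1.
Proof. intros. split; [apply exp_pos|]. rewrite <- exp_0. apply exp_increasing; auto. Qed.

Section Sys.
End Sys.

Lemma dvv N p u u1 u2 t : radial_sol N p u u1 u2 -> t < 0 ->
  derivable_pt_lim (vv p u) t (ww p u u1 t).
Proof.
  intros [_ [Hd1 _]] Ht. assert (He := exp_lt1 t Ht). unfold vv, ww.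
  eapply deq. apply (dmul (fun t => exp (cc p * t)) (fun t => u (exp t))).
  - apply dexpk.
  - apply (dcomp u exp). apply derivable_pt_lim_exp. apply Hd1. lra.
  - cbv beta; ring.
Qed.

Lemma dww N p u u1 u2 t : 1 < p -> radial_sol N p u u1 u2 -> t < 0 ->
  derivable_pt_lim (ww p u u1) t (Wd N p u u1 t).
Proof.
  intros Hp Hs Ht. pose proof Hs as [_ [Hd1 [Hd2 [_ [Hode _]]]]].
  assert (He := exp_lt1 t Ht). unfold ww.
  eapply deq. apply (dmul (fun t => exp (cc p * t)) (fun t => cc p * u (exp t) + exp t * u1 (exp t))).
  - apply dexpk.
  - apply dplus.
    + apply (dmul (fun _ => cc p) (fun t => u (exp t))). apply dconst.
      apply (dcomp u exp). apply derivable_pt_lim_exp. apply Hd1. lra.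
    + apply (dmul exp (fun t => u1 (exp t))). apply derivable_pt_lim_exp.
      apply (dcomp u1 exp). apply derivable_pt_lim_exp. apply Hd2. lra.
  - unfold Wd, vv, ww, AA, bb. rewrite nl_scale.
    assert (Hc : cc p * (p - 1) = 2) by (unfold cc; field; lra).
    replace (p * (cc p * t)) with (cc p * t + 2 * t) by nra.
    rewrite exp_plus.
    assert (Ho := Hode (exp t) He).
    set (r := exp t) in *. set (E := exp (cc p * t)) in *.
    assert (Er : exp (2 * t) = r * r) by (unfold r; rewrite <- exp_plus; f_equal; ring).
    rewrite Er.
    assert (Hu2 : u2 r = - ((INR N - 1) / r * u1 r) - nl p (u r)) by lra.
    rewrite Hu2. field. lra.
Qed.

Lemma dsq f x df : derivable_pt_lim f x df ->
  derivable_pt_lim (fun y => (f y)^2) x (2 * f x * df).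
Proof.
  intros H. apply (derivable_pt_lim_locally_ext (fun y => f y * f y) _ x (x-1) (x+1)); [lra| |].
  - intros; ring.
  - eapply deq. apply dmul; eauto. ring.
Qed.

Lemma dHH N p u u1 u2 t : 1 < p -> radial_sol N p u u1 u2 -> t < 0 ->
  derivable_pt_lim (HH N p u u1) t (AA N p * (ww p u u1 t)^2).
Proof.
  intros Hp Hs Ht. unfold HH.
  assert (Dv := dvv N p u u1 u2 t Hs Ht).
  assert (Dw := dww N p u u1 u2 t Hp Hs Ht).
  eapply deq. apply dplus. apply (dplus (fun t => (ww p u u1 t)^2/2) (fun t => - (bb N p * (vv p u t)^2/2))).
  - apply (dmul (fun t => (ww p u u1 t)^2) (fun _ => /2)).
    + apply dsq; eauto.
    + apply dconst.
  - apply (derivable_pt_lim_opp (fun t => bb N p * (vv p u t)^2 / 2)).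
    apply (dmul (fun t => bb N p * (vv p u t)^2) (fun _ => /2)).
    apply (dmul (fun _ => bb N p) (fun t => (vv p u t)^2)). apply dconst.
    + apply dsq; eauto.
    + apply dconst.
  - apply (dcomp (Fp p) (vv p u)). eauto. apply Fp_deriv; auto.
  - unfold Wd. cbv beta. field.
Qed.

Lemma cont_eps f x : continuity_pt f x ->
  forall eps, 0 < eps -> exists d, 0 < d /\ forall y, Rabs (y - x) < d -> Rabs (f y - f x) < eps.
Proof.
  intros Hc eps He. destruct (Hc eps He) as [d [Hd Hdd]].
  exists d. split; auto. intros y Hy.
  destruct (Req_dec y x) as [->|Hne].
  - rewrite Rminus_diag, Rabs_R0. auto.
  - apply (Hdd y). split; [split; [exact I|auto]|]. simpl. unfold Rdist. auto.
Qed.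

Lemma abs_le_inv a b : Rabs a <= b -> - b <= a <= b.
Proof. intros H. pose proof (Rle_abs a). pose proof (Rle_abs (-a)). rewrite Rabs_Ropp in *. lra. Qed.

Lemma dl_cont f x l : derivable_pt_lim f x l -> continuity_pt f x.
Proof. intros H. apply derivable_continuous_pt. exists l. auto. Qed.

Lemma Fp_small p x : 1 < p -> Rabs x <= 1 -> Rabs (Fp p x) <= x^2.
Proof.
  intros Hp Hx. unfold Fp.
  assert (Rabs (nl p x) <= Rabs x) by (apply nl_small; lra).
  unfold Rdiv. rewrite !Rabs_mult, (Rabs_right (/ (p+1))) by (left; apply Rinv_0_lt_compat; lra).
  assert (/ (p+1) < 1) by (rewrite <- Rinv_1; apply Rinv_lt_contravar; lra).
  assert (0 < / (p+1)) by (apply Rinv_0_lt_compat; lra).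
  assert (0 <= Rabs (nl p x)) by apply Rabs_pos.
  assert (0 <= Rabs x) by apply Rabs_pos.
  assert (Rabs x * Rabs x = x^2) by (rewrite <- Rabs_mult; simpl; rewrite Rmult_1_r; apply Rabs_right; nra).
  assert (Rabs x * Rabs (nl p x) <= Rabs x * Rabs x) by (apply Rmult_le_compat_l; lra).
  assert (0 <= Rabs x * Rabs (nl p x)) by (apply Rmult_le_pos; lra).
  assert (Rabs x * Rabs (nl p x) * / (p + 1) <= Rabs x * Rabs (nl p x) * 1) by (apply Rmult_le_compat_l; lra).
  lra.
Qed.

Lemma near0 N p u u1 u2 : 1 < p -> radial_sol N p u u1 u2 -> 0 < u 0 ->
  forall eta T, 0 < eta -> T < 0 -> exists tau, tau < T /\
    forall t, t <= tau -> 0 < ww p u u1 t /\ 0 < vv p u t /\ Rabs (HH N p u u1 t) <= eta.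
Proof.
  intros Hp Hs Hu0 eta T Heta HT.
  pose proof Hs as [_ [Hd1 [Hd2 _]]].
  assert (Hc : 0 < cc p) by (unfold cc; apply Rdiv_lt_0_compat; lra).
  destruct (cont_eps u 0 (dl_cont _ _ _ (Hd1 0 ltac:(lra))) (u 0 / 2) ltac:(lra)) as [d1 [Hd1p Hu]].
  destruct (cont_eps u1 0 (dl_cont _ _ _ (Hd2 0 ltac:(lra))) 1 ltac:(lra)) as [d2 [Hd2p Hu1]].
  set (L := Rabs (u1 0) + 1).
  set (Ub := 3 * u 0 / 2).
  set (Z := cc p * Ub + L).
  set (K := Z^2/2 + Rabs (bb N p) * Ub^2 / 2 + Ub^2 + 1).
  assert (HL : 0 < L) by (unfold L; pose proof (Rabs_pos (u1 0)); lra).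
  assert (HUb : 0 < Ub) by (unfold Ub; lra).
  assert (HK : 0 < K) by (unfold K; pose proof (Rabs_pos (bb N p)); assert (0 <= Z^2) by nra;
                          assert (0 <= Rabs (bb N p) * Ub ^ 2) by (apply Rmult_le_pos; nra); nra).
  set (rho := Rmin (Rmin d1 d2) (Rmin 1 (cc p * u 0 / (4 * L)))).
  assert (Hrho : 0 < rho).
  { unfold rho. repeat apply Rmin_pos; try lra. apply Rdiv_lt_0_compat; nra. }
  assert (Hr1 : rho <= d1) by (unfold rho; eapply Rle_trans; [apply Rmin_l|apply Rmin_l]).
  assert (Hr2 : rho <= d2) by (unfold rho; eapply Rle_trans; [apply Rmin_l|apply Rmin_r]).
  assert (Hr3 : rho <= 1) by (unfold rho; eapply Rle_trans; [apply Rmin_r|apply Rmin_l]).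
  assert (Hr4 : rho <= cc p * u 0 / (4 * L)) by (unfold rho; eapply Rle_trans; [apply Rmin_r|apply Rmin_r]).
  set (theta := Rmin (eta / K) (Rmin (/ (Ub^2)) 1)).
  assert (Hth : 0 < theta).
  { unfold theta. repeat apply Rmin_pos; try lra. apply Rdiv_lt_0_compat; lra.
    apply Rinv_0_lt_compat; nra. }
  assert (Ht1 : theta <= eta / K) by (unfold theta; apply Rmin_l).
  assert (Ht2 : theta <= / (Ub^2)) by (unfold theta; eapply Rle_trans; [apply Rmin_r|apply Rmin_l]).
  set (tau := Rmin (T - 1) (Rmin (ln rho - 1) (ln theta / (2 * cc p)))).
  exists tau. split.
  { unfold tau. eapply Rle_lt_trans; [apply Rmin_l|lra]. }
  intros t Ht.
  assert (Htt1 : t <= ln rho - 1) by (eapply Rle_trans; [exact Ht|unfold tau; eapply Rle_trans; [apply Rmin_r|apply Rmin_l]]).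
  assert (Htt2 : t <= ln theta / (2 * cc p)) by (eapply Rle_trans; [exact Ht|unfold tau; eapply Rle_trans; [apply Rmin_r|apply Rmin_r]]).
  assert (Hr : 0 < exp t < rho).
  { split; [apply exp_pos|]. rewrite <- (exp_ln rho) by auto. apply exp_increasing. lra. }
  assert (HE2 : exp (cc p * t) ^ 2 <= theta).
  { rewrite <- (exp_ln theta) by auto. simpl. rewrite Rmult_1_r, <- exp_plus.
    destruct (Req_dec (cc p * t + cc p * t) (ln theta)) as [->|Hne]; [lra|].
    left. apply exp_increasing.
    assert (t * (2 * cc p) <= ln theta).
    { apply (Rmult_le_compat_r (2 * cc p)) in Htt2; [|lra].
      unfold Rdiv in Htt2. rewrite Rmult_assoc, Rinv_l in Htt2 by lra. lra. }
    lra. }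
  set (r := exp t) in *. set (E := exp (cc p * t)) in *.
  assert (HE : 0 < E) by apply exp_pos.
  assert (Hur : Rabs (u r - u 0) < u 0 / 2) by (apply Hu; rewrite Rminus_0_r, Rabs_right; lra).
  assert (Hu1r : Rabs (u1 r - u1 0) < 1) by (apply Hu1; rewrite Rminus_0_r, Rabs_right; lra).
  apply Rabs_def2 in Hur. apply Rabs_def2 in Hu1r.
  pose proof (Rle_abs (u1 0)) as Ha1. pose proof (Rle_abs (- u1 0)) as Ha2. rewrite Rabs_Ropp in Ha2.
  assert (Hu1b : - L <= u1 r <= L) by (unfold L in *; lra).
  assert (Hru1 : - (r * L) <= r * u1 r <= r * L) by (split; nra).
  assert (HrL : r * L <= cc p * u 0 / 4).
  { apply Rle_trans with (rho * L); [nra|].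
    apply Rle_trans with (cc p * u 0 / (4 * L) * L); [nra|]. right; field; lra. }
  set (z := cc p * u r + r * u1 r).
  assert (Hz0 : 0 < z) by (unfold z; nra).
  assert (Hz1 : z <= Z) by (unfold z, Z, Ub; nra).
  assert (Hww : ww p u u1 t = E * z) by (unfold ww, z; fold r E; ring).
  assert (Hvv : vv p u t = E * u r) by (unfold vv; fold r E; ring).
  split; [rewrite Hww; nra|]. split; [rewrite Hvv; nra|].
  assert (HEu : (E * u r)^2 <= 1).
  { assert (E^2 * Ub^2 <= 1).
    { apply Rle_trans with (/ (Ub^2) * Ub^2); [apply Rmult_le_compat_r; nra|].
      right; field; nra. }
    assert (0 < u r < Ub) by (unfold Ub; lra).
    assert (u r ^2 <= Ub^2) by nra.
    assert ((E * u r)^2 = E^2 * u r ^2) by ring.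
    assert (E^2 * u r ^2 <= E^2 * Ub^2) by (apply Rmult_le_compat_l; nra). nra. }
  assert (HEu' : Rabs (E * u r) <= 1).
  { rewrite Rabs_right by nra. nra. }
  assert (HF := Fp_small p (E * u r) Hp HEu').
  unfold HH. rewrite Hww, Hvv.
  assert (Hb := Rabs_pos (bb N p)).
  assert (Hb1 : - Rabs (bb N p) <= bb N p <= Rabs (bb N p)).
  { pose proof (Rle_abs (bb N p)). pose proof (Rle_abs (- bb N p)). rewrite Rabs_Ropp in *. lra. }
  apply abs_le_inv in HF.
  assert (0 < u r < Ub) by (unfold Ub; lra).
  assert (Hz2 : z^2 <= Z^2) by nra.
  assert (Hu2 : u r ^2 <= Ub^2) by nra.
  assert (HE2' : 0 <= E^2) by nra.
  assert (E^2 * K <= eta).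
  { apply Rle_trans with (theta * K); [apply Rmult_le_compat_r; lra|].
    apply Rle_trans with (eta / K * K); [apply Rmult_le_compat_r; lra|]. right; field; lra. }
  assert (Hbu : Rabs (bb N p) * u r ^2 <= Rabs (bb N p) * Ub^2) by (apply Rmult_le_compat_l; lra).
  assert (E^2 * (z^2/2 + Rabs (bb N p) * u r ^2 / 2 + u r^2) <= E^2 * K).
  { apply Rmult_le_compat_l; [lra|]. unfold K. lra. }
  assert (Hbv : - Rabs (bb N p) * u r ^2 <= bb N p * u r^2 <= Rabs (bb N p) * u r ^2) by (split; nra).
  assert (Hexp1 : (E * z)^2 = E^2 * z^2) by ring.
  assert (Hexp2 : (E * u r)^2 = E^2 * u r^2) by ring.
  rewrite Hexp1, Hexp2 in *.
  assert (E^2 * (bb N p * u r ^2) <= E^2 * (Rabs (bb N p) * u r ^2)) by (apply Rmult_le_compat_l; lra).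
  assert (E^2 * (- Rabs (bb N p) * u r ^2) <= E^2 * (bb N p * u r ^2)) by (apply Rmult_le_compat_l; lra).
  apply Rabs_le. split; nra.
Qed.

Definition dyn (v w H Wd : R -> R) (A tau : R) : Prop :=
  (forall t, t < 0 -> derivable_pt_lim v t (w t)) /\
  (forall t, t < 0 -> derivable_pt_lim w t (Wd t)) /\
  (forall t, t < 0 -> derivable_pt_lim H t (A * (w t)^2)) /\
  0 <= A /\
  (forall t, tau <= t < 0 -> w t = 0 -> forall s, (s = 1 \/ s = -1) -> 0 < s * v t -> s * Wd t < 0) /\
  (forall t, tau <= t < 0 -> ~ (v t = 0 /\ w t = 0)).

Lemma sgn_sq s : (s = 1 \/ s = -1) -> s * s = 1.
Proof. intros [->| ->]; ring. Qed.

Lemma sgn_abs s : (s = 1 \/ s = -1) -> Rabs s = 1.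
Proof. intros [->| ->]; [apply Rabs_R1|rewrite Rabs_left; lra]. Qed.

Lemma piece v w H Wd A tau K1 K2 a b k :
  dyn v w H Wd A tau -> a <= b -> b < 0 -> (k = 1 \/ k = -1) ->
  (forall t, a < t < b -> 0 <= k * w t) ->
  (forall t, a <= t <= b -> Rabs (v t) <= K1 /\ Rabs (w t) <= K2) ->
  H b - H a <= 2 * A * K1 * K2.
Proof.
  intros [Dv [Dw [DH [HA _]]]] Hab Hb Hk Hs Hbd.
  assert (Hkk := sgn_sq k Hk).
  assert (HG : (fun t => H t - A * K2 * k * v t) b <= (fun t => H t - A * K2 * k * v t) a).
  { apply (mvt_le (fun t => H t - A * K2 * k * v t) (fun t => A * (w t)^2 - A * K2 * k * w t) a b); auto.
    - intros x Hx. eapply deq. apply (derivable_pt_lim_minus H (fun t => A * K2 * k * v t)).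
      + apply DH; lra.
      + apply (dmul (fun _ => A * K2 * k) v). apply dconst. apply Dv; lra.
      + cbv beta. ring.
    - intros x Hx. cbv beta.
      assert (H1 := Hs x Hx). destruct (Hbd x ltac:(lra)) as [_ H2].
      assert (k * w x <= K2).
      { apply Rle_trans with (Rabs (k * w x)); [apply Rle_abs|].
        rewrite Rabs_mult, sgn_abs by auto. lra. }
      assert (A * (w x)^2 - A * K2 * k * w x = A * (k * w x) * (k * w x - K2)).
      { replace ((w x)^2) with (k * k * (w x * w x)) by (rewrite Hkk; ring). ring. }
      rewrite H3. assert (0 <= A * (k * w x)) by (apply Rmult_le_pos; lra). nra. }
  cbv beta in HG.
  destruct (Hbd a ltac:(lra)) as [Ha _]. destruct (Hbd b ltac:(lra)) as [Hb' _].
  assert (K2pos : 0 <= K2).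
  { destruct (Hbd a ltac:(lra)) as [_ Hw]. pose proof (Rabs_pos (w a)). lra. }
  assert (Hkv : k * (v b - v a) <= 2 * K1).
  { apply Rle_trans with (Rabs (k * (v b - v a))); [apply Rle_abs|].
    rewrite Rabs_mult. rewrite sgn_abs by auto.
    pose proof (Rabs_triang (v b) (- v a)). rewrite Rabs_Ropp in H0. unfold Rminus. lra. }
  assert (A * K2 * (k * (v b - v a)) <= A * K2 * (2 * K1)) by (apply Rmult_le_compat_l; [apply Rmult_le_pos|]; lra).
  nra.
Qed.

Lemma sgn_cancel s y : (s = 1 \/ s = -1) -> s * y = 0 -> y = 0.
Proof. intros [->| ->] H; lra. Qed.

Lemma dscal s f x df : derivable_pt_lim f x df -> derivable_pt_lim (fun t => s * f t) x (s * df).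
Proof. intros H. eapply deq. apply (dmul (fun _ => s) f); [apply dconst|exact H]. cbv beta; ring. Qed.

Lemma step v w H Wd A tau K1 K2 c lo X RR SS R2 s s' Y :
  dyn v w H Wd A tau -> 0 < c -> lo < X -> X < RR -> RR < SS -> SS < R2 -> R2 <= 0 -> tau <= X ->
  (s = 1 \/ s = -1) -> (s' = 1 \/ s' = -1) ->
  (forall t, lo < t < RR -> 0 < s * v t) -> (forall t, RR < t < R2 -> 0 < s' * v t) ->
  v RR = 0 -> 0 < s * w X -> w SS = c * v SS ->
  X <= Y <= SS -> (forall t, X <= t <= Y -> Rabs (v t) <= K1 /\ Rabs (w t) <= K2) ->
  H Y <= H X + 3 * (2 * A * K1 * K2).
Proof.
  intros Hdyn Hc Hlo HXR HRS HSR' HR' Htau Hs Hs' Hreg Hreg' HvR HwX HwS HY Hbd.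
  pose proof Hdyn as [Dv [Dw [DH [HA [Htr Hnz]]]]].
  assert (Hss := sgn_sq s Hs). assert (Hss' := sgn_sq s' Hs').
  assert (HD : 0 <= 2 * A * K1 * K2).
  { destruct (Hbd X ltac:(lra)) as [H1 H2].
    pose proof (Rabs_pos (v X)). pose proof (Rabs_pos (w X)).
    assert (0 <= A * K1) by (apply Rmult_le_pos; lra).
    assert (0 <= A * K1 * K2) by (apply Rmult_le_pos; lra). lra. }
  assert (Dg : forall k x, x < 0 -> derivable_pt_lim (fun t => k * w t) x (k * Wd x))
    by (intros; apply dscal; apply Dw; auto).
  assert (TrA : forall x, X <= x < RR -> (fun t => s * w t) x = 0 -> s * Wd x < 0).
  { intros x Hx Hz. cbv beta in Hz. apply (Htr x); try lra.
    - apply (sgn_cancel s); auto.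
    - apply Hreg; lra. }
  assert (TrB : forall x, RR < x <= SS -> (fun t => s' * w t) x = 0 -> s' * Wd x < 0).
  { intros x Hx Hz. cbv beta in Hz. apply (Htr x); try lra.
    - apply (sgn_cancel s'); auto.
    - apply Hreg'; lra. }
  assert (HwR : s * w RR < 0).
  { destruct (Rlt_or_le (s * w RR) 0) as [|Hle]; [auto|exfalso].
    assert (Hne : w RR <> 0) by (intros Hw; apply (Hnz RR); [lra|auto]).
    assert (Hpos : 0 < s * w RR).
    { destruct (Rle_lt_or_eq_dec _ _ Hle) as [|Heq]; [auto|].
      exfalso. apply Hne. apply (sgn_cancel s); auto. }
    assert (Dm : derivable_pt_lim (fun t => (- s) * v t) RR (- s * w RR)) by (apply dscal; apply Dv; lra).
    destruct (deriv_neg_sides _ RR _ Dm ltac:(lra)) as [d [Hd Hdd]].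
    set (h := Rmin (d/2) ((RR - X)/2)).
    assert (0 < h < d) by (unfold h; split; [apply Rmin_pos; lra|eapply Rle_lt_trans; [apply Rmin_l|lra]]).
    assert (h <= (RR - X)/2) by (unfold h; apply Rmin_r).
    destruct (Hdd h H0) as [_ Hh]. cbv beta in Hh. rewrite HvR in Hh.
    assert (0 < s * v (RR - h)) by (apply Hreg; lra). lra. }
  destruct (ivt_gen (fun t => s * w t) X RR ltac:(lra)) as [z [Hz Hgz]].
  { intros x Hx. apply (dl_cont _ _ _ (Dg s x ltac:(lra))). }
  { cbv beta. nra. }
  cbv beta in Hgz.
  assert (HzX : X < z) by (destruct (Req_dec z X); [subst; lra|lra]).
  assert (HzR : z < RR) by (destruct (Req_dec z RR); [subst; lra|lra]).
  assert (P1 : forall t, X < t < z -> 0 <= s * w t).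
  { intros t Ht. destruct (Rle_or_lt 0 (s * w t)) as [|Hneg]; [auto|exfalso].
    destruct (ivt_gen (fun t => s * w t) X t ltac:(lra)) as [t2 [Ht2 Hgt2]].
    { intros x Hx. apply (dl_cont _ _ _ (Dg s x ltac:(lra))). }
    { cbv beta. nra. }
    assert (HT2 : t2 < z) by lra.
    assert (Hlt : (fun t => s * w t) z < 0).
    { apply (sign_persist (fun t => s * w t) (fun t => s * Wd t) t2 z HT2).
      - intros x Hx. apply Dg. lra.
      - intros x Hx. apply TrA. lra.
      - cbv beta. lra. }
    cbv beta in Hlt. lra. }
  assert (P2 : forall t, z < t < RR -> 0 <= - s * w t).
  { intros t Ht.
    assert (Hlt : (fun t => s * w t) t < 0).
    { apply (sign_persist (fun t => s * w t) (fun t => s * Wd t) z t ltac:(lra)).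
      - intros x Hx. apply Dg. lra.
      - intros x Hx. apply TrA. lra.
      - cbv beta. lra. }
    cbv beta in Hlt. lra. }
  assert (P3 : forall t, RR < t < SS -> 0 <= s' * w t).
  { intros t Ht. destruct (Rle_or_lt 0 (s' * w t)) as [|Hneg]; [auto|exfalso].
    assert (Hlt : (fun t => s' * w t) SS < 0).
    { apply (sign_persist (fun t => s' * w t) (fun t => s' * Wd t) t SS ltac:(lra)).
      - intros x Hx. apply Dg. lra.
      - intros x Hx. apply TrB. lra.
      - cbv beta. lra. }
    cbv beta in Hlt. rewrite HwS in Hlt.
    assert (0 < s' * v SS) by (apply Hreg'; lra). nra. }
  assert (Hm1 : - s = 1 \/ - s = -1) by (destruct Hs as [-> | ->]; [right|left]; lra).
  destruct (Rle_or_lt Y z) as [HYz|HYz].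
  - assert (H Y - H X <= 2 * A * K1 * K2).
    { apply (piece v w H Wd A tau K1 K2 X Y s); auto; try lra.
      intros t Ht; apply P1; lra. }
    lra.
  - assert (H z - H X <= 2 * A * K1 * K2).
    { apply (piece v w H Wd A tau K1 K2 X z s); auto; try lra; intros t Ht; first [apply Hbd; lra | apply P1; lra | apply P2; lra | apply P3; lra]. }
    destruct (Rle_or_lt Y RR) as [HYR|HYR].
    + assert (H Y - H z <= 2 * A * K1 * K2).
      { apply (piece v w H Wd A tau K1 K2 z Y (- s)); auto; try lra; intros t Ht; first [apply Hbd; lra | apply P1; lra | apply P2; lra | apply P3; lra]. }
      lra.
    + assert (H RR - H z <= 2 * A * K1 * K2).
      { apply (piece v w H Wd A tau K1 K2 z RR (- s)); auto; try lra; intros t Ht; first [apply Hbd; lra | apply P1; lra | apply P2; lra | apply P3; lra]. }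
      assert (H Y - H RR <= 2 * A * K1 * K2).
      { apply (piece v w H Wd A tau K1 K2 RR Y s'); auto; try lra; intros t Ht; first [apply Hbd; lra | apply P1; lra | apply P2; lra | apply P3; lra]. }
      lra.
Qed.

Lemma cc_pos p : 1 < p -> 0 < cc p.
Proof. intros; unfold cc; apply Rdiv_lt_0_compat; lra. Qed.

Lemma H_mono N p u u1 u2 t1 t2 : 1 < p -> radial_sol N p u u1 u2 -> 0 <= AA N p ->
  t1 <= t2 -> t2 < 0 -> HH N p u u1 t1 <= HH N p u u1 t2.
Proof.
  intros Hp Hs HA H12 H2.
  assert (- HH N p u u1 t2 <= - HH N p u u1 t1).
  { apply (mvt_le (fun t => - HH N p u u1 t) (fun t => - (AA N p * (ww p u u1 t)^2)) t1 t2); auto.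
    - intros x Hx. apply derivable_pt_lim_opp. apply (dHH N p u u1 u2); auto; lra.
    - intros x Hx. assert (0 <= (ww p u u1 x)^2) by nra. nra. }
  lra.
Qed.

Lemma H_nonneg N p u u1 u2 t : 1 < p -> radial_sol N p u u1 u2 -> 0 < u 0 -> 0 <= AA N p ->
  t < 0 -> 0 <= HH N p u u1 t.
Proof.
  intros Hp Hs Hu HA Ht.
  destruct (Rle_or_lt 0 (HH N p u u1 t)) as [|Hneg]; [auto|exfalso].
  destruct (near0 N p u u1 u2 Hp Hs Hu (- HH N p u u1 t / 2) t ltac:(lra) Ht) as [tau [Htau Hb]].
  destruct (Hb tau ltac:(lra)) as [_ [_ Habs]].
  apply abs_le_inv in Habs.
  assert (HH N p u u1 tau <= HH N p u u1 t) by (apply (H_mono N p u u1 u2); auto; lra).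
  lra.
Qed.

Lemma Fp_form p x : x <> 0 -> Fp p x = exp ((p-1) * ln (Rabs x)) * (x * x) / (p+1).
Proof. intros Hx. unfold Fp. rewrite nl_nz by auto. unfold Rdiv; ring. Qed.

Lemma dyn_inst N p u u1 u2 : 1 < p -> radial_sol N p u u1 u2 -> 0 < u 0 ->
  0 < AA N p -> 0 <= bb N p ->
  forall eta T, 0 < eta -> T < 0 -> exists tau, tau < T /\ HH N p u u1 tau <= eta /\ 0 < ww p u u1 tau /\ 0 < vv p u tau /\
    (forall t, t <= tau -> 0 < vv p u t) /\
    0 < HH N p u u1 tau /\
    dyn (vv p u) (ww p u u1) (HH N p u u1) (Wd N p u u1) (AA N p) tau.
Proof.
  intros Hp Hs Hu HA Hb eta T Heta HT.
  destruct (near0 N p u u1 u2 Hp Hs Hu eta T Heta HT) as [tau [Htau Hn]].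
  exists tau. split; [auto|]. split; [destruct (Hn tau ltac:(lra)) as [_ [_ Hab]]; apply abs_le_inv in Hab; lra|].
  destruct (Hn tau ltac:(lra)) as [Hw0 [Hv0 _]].
  split; [auto|]. split; [auto|]. split; [intros t Ht; apply Hn; auto|].
  assert (Hpos : 0 < HH N p u u1 tau).
  { destruct (MVT_cor2 (HH N p u u1) (fun t => AA N p * (ww p u u1 t)^2) (tau - 1) tau ltac:(lra))
      as [xi [Hxi1 Hxi2]].
    { intros x Hx. apply (dHH N p u u1 u2); auto; lra. }
    assert (0 < ww p u u1 xi) by (apply Hn; lra).
    assert (0 <= HH N p u u1 (tau - 1)) by (apply (H_nonneg N p u u1 u2); auto; lra).
    assert (0 < AA N p * (ww p u u1 xi)^2) by (apply Rmult_lt_0_compat; nra).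
    nra. }
  split; [auto|].
  assert (Hpos2 : forall t, tau <= t < 0 -> 0 < HH N p u u1 t).
  { intros t Ht. assert (HH N p u u1 tau <= HH N p u u1 t) by (apply (H_mono N p u u1 u2); auto; lra). lra. }
  repeat split.
  - intros; apply (dvv N p u u1 u2); auto.
  - intros; apply (dww N p u u1 u2); auto.
  - intros; apply (dHH N p u u1 u2); auto.
  - lra.
  - intros t Ht Hw0' s Hs' Hsv.
    assert (HHt := Hpos2 t Ht).
    unfold Wd. rewrite Hw0'.
    set (V := vv p u t) in *.
    assert (HV : V <> 0).
    { intros HV. unfold HH in HHt. rewrite Hw0' in HHt. fold V in HHt. rewrite HV in HHt.
      unfold Fp in HHt. rewrite nl_0 in HHt. lra. }
    unfold HH in HHt. rewrite Hw0' in HHt. fold V in HHt. rewrite Fp_form in HHt by auto.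
    rewrite nl_nz by auto.
    set (Y := exp ((p - 1) * ln (Rabs V))) in *.
    assert (HY : 0 < Y) by apply exp_pos.
    assert (HV2 : 0 < V * V) by (destruct (Rlt_or_le 0 V); nra).
    assert (HYb : bb N p < Y).
    { assert (Y * (V * V) / (p + 1) > bb N p * V^2 / 2) by (simpl in HHt; lra).
      assert (Y * (V*V) * 2 > bb N p * (V*V) * (p+1)).
      { apply (Rmult_gt_compat_r (2 * (p+1))) in H; [|lra].
        replace (Y * (V * V) / (p + 1) * (2 * (p + 1))) with (Y * (V*V) * 2) in H by (field; lra).
        replace (bb N p * V ^ 2 / 2 * (2 * (p + 1))) with (bb N p * (V*V) * (p+1)) in H by (field; lra).
        lra. }
      assert (bb N p * (V*V) * (p+1) >= bb N p * (V*V) * 2) by (apply Rle_ge; apply Rmult_le_compat_l; nra).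
      nra. }
    replace (AA N p * 0 + bb N p * V - Y * V) with ((bb N p - Y) * V) by ring.
    nra.
  - intros t Ht [Hv Hw]. assert (HHt := Hpos2 t Ht).
    unfold HH in HHt. rewrite Hv, Hw in HHt. unfold Fp in HHt. rewrite nl_0 in HHt. lra.
Qed.

Lemma Rdiv_le_0_compat a b : 0 <= a -> 0 < b -> 0 <= a / b.
Proof. intros. unfold Rdiv. apply Rmult_le_pos; [auto|left; apply Rinv_0_lt_compat; auto]. Qed.

Definition QQ (P1 B0 : R) := P1 * (1 + B0/2) + 1.
Definition KK1 (P1 B0 d : R) := exp (ln (QQ P1 B0) / d).
Definition KK2 (P1 B0 d : R) := 3 + B0 * (KK1 P1 B0 d)^2.

Lemma bounds_real p b P1 B0 d V W : 1 < p -> 0 < d -> d <= p - 1 -> p + 1 <= P1 ->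
  0 <= b <= B0 ->
  0 <= W^2/2 - b * V^2/2 + Fp p V <= 1 ->
  Rabs V <= KK1 P1 B0 d /\ Rabs W <= KK2 P1 B0 d.
Proof.
  intros Hp Hd HdP HP1 Hb HH.
  assert (HQ : 1 <= QQ P1 B0) by (unfold QQ; nra).
  assert (HlnQ : 0 <= ln (QQ P1 B0)).
  { rewrite <- ln_1. destruct (Rle_lt_or_eq_dec _ _ HQ) as [Hl|He]; [left; apply ln_increasing; lra|rewrite He; lra]. }
  assert (HK1 : 1 <= KK1 P1 B0 d).
  { unfold KK1. rewrite <- exp_0. assert (0 <= ln (QQ P1 B0) / d) by (apply Rdiv_le_0_compat; lra).
    destruct (Rle_lt_or_eq_dec _ _ H) as [Hl|He]; [left; apply exp_increasing; auto|rewrite <- He; lra]. }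
  assert (HF0 := Fp_nonneg p V Hp).
  assert (HV : Rabs V <= KK1 P1 B0 d).
  { destruct (Rle_or_lt (Rabs V) (KK1 P1 B0 d)) as [|Hgt]; [auto|exfalso].
    assert (HV0 : V <> 0) by (intros ->; rewrite Rabs_R0 in Hgt; lra).
    assert (Hln : ln (QQ P1 B0) / d < ln (Rabs V)).
    { rewrite <- (ln_exp (ln (QQ P1 B0) / d)). apply ln_increasing; [apply exp_pos|auto]. }
    assert (HlnV : 0 <= ln (Rabs V)) by (assert (0 <= ln (QQ P1 B0) / d) by (apply Rdiv_le_0_compat; lra); lra).
    assert (Hm : ln (QQ P1 B0) < (p - 1) * ln (Rabs V)).
    { assert (ln (QQ P1 B0) = d * (ln (QQ P1 B0) / d)) by (field; lra).
      assert (d * (ln (QQ P1 B0) / d) < d * ln (Rabs V)) by (apply Rmult_lt_compat_l; lra).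
      assert (d * ln (Rabs V) <= (p-1) * ln (Rabs V)) by (apply Rmult_le_compat_r; lra). lra. }
    assert (HY : QQ P1 B0 < exp ((p - 1) * ln (Rabs V))).
    { rewrite <- (exp_ln (QQ P1 B0)) by lra. apply exp_increasing; auto. }
    rewrite Fp_form in HH by auto.
    set (Y := exp ((p - 1) * ln (Rabs V))) in *.
    assert (HVV : Rabs V * Rabs V = V * V) by (rewrite <- Rabs_mult; apply Rabs_right; nra).
    assert (HV1 : 1 < V * V) by nra.
    assert (HYQ : (p + 1) * (1 + B0/2) <= Y).
    { unfold QQ in HY. assert ((p+1) * (1 + B0/2) <= P1 * (1 + B0/2)) by (apply Rmult_le_compat_r; lra). lra. }
    assert (HF : (1 + B0/2) * (V*V) <= Y * (V * V) / (p + 1)).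
    { assert (Y * (V * V) / (p + 1) - (1 + B0/2) * (V*V) = (V*V) * (Y - (p+1)*(1+B0/2)) / (p+1)) by (field; lra).
      assert (0 <= (V*V) * (Y - (p+1)*(1+B0/2)) / (p+1)).
      { apply Rdiv_le_0_compat; [apply Rmult_le_pos; lra|lra]. }
      lra. }
    assert (b * (V*V) <= B0 * (V*V)) by (apply Rmult_le_compat_r; lra).
    assert (0 <= W^2) by nra.
    simpl in HH. lra. }
  split; [auto|].
  assert (HV2 : V * V <= KK1 P1 B0 d ^ 2).
  { assert (Rabs V * Rabs V = V * V) by (rewrite <- Rabs_mult; apply Rabs_right; nra).
    pose proof (Rabs_pos V). simpl. nra. }
  assert (HW2 : W * W <= 2 + B0 * KK1 P1 B0 d ^ 2).
  { assert (b * (V*V) <= B0 * (V*V)) by (apply Rmult_le_compat_r; nra).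
    assert (B0 * (V*V) <= B0 * KK1 P1 B0 d ^ 2) by (apply Rmult_le_compat_l; lra).
    simpl in HH. lra. }
  assert (Rabs W * Rabs W = W * W) by (rewrite <- Rabs_mult; apply Rabs_right; nra).
  unfold KK2. pose proof (Rabs_pos W). nra.
Qed.

Lemma rad_incr m u rad : nodal_radii m u rad ->
  forall a b, (1 <= a)%nat -> (a < b)%nat -> (b <= m)%nat -> rad a < rad b.
Proof.
  intros [_ [_ [_ [Hinc _]]]] a b Ha Hab Hb.
  induction b as [|b IH]; [lia|].
  destruct (Nat.eq_dec a b) as [->|Hne].
  - apply Hinc; lia.
  - apply Rlt_trans with (rad b); [apply IH; lia|apply Hinc; lia].
Qed.

Lemma rad_pos m u rad : (2 <= m)%nat -> nodal_radii m u rad ->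
  forall j, (1 <= j <= m)%nat -> 0 < rad j <= 1.
Proof.
  intros Hm Hn j Hj. pose proof Hn as [_ [Hm1 [Hz _]]].
  destruct (Nat.eq_dec j m) as [->|Hne].
  - rewrite Hm1; lra.
  - destruct (Hz j ltac:(lia)) as [H _]; lra.
Qed.

Lemma zero_free m u rad : (2 <= m)%nat -> nodal_radii m u rad ->
  forall j, (j <= m - 1)%nat -> forall r,
    (if Nat.eq_dec j 0 then 0 <= r else rad j < r) -> r < rad (S j) -> u r <> 0.
Proof.
  intros Hm Hn j Hj r Hr1 Hr2 Hu.
  pose proof Hn as [_ [_ [_ [_ Hall]]]].
  assert (HSj := rad_pos m u rad Hm Hn (S j) ltac:(lia)).
  assert (Hr0 : 0 <= r).
  { destruct (Nat.eq_dec j 0); [auto|]. assert (HH := rad_pos m u rad Hm Hn j ltac:(lia)). lra. }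
  destruct (Hall r ltac:(lra) Hu) as [k [Hk ->]].
  destruct (Nat.eq_dec j 0) as [->|Hj0].
  - destruct (Nat.eq_dec k 1) as [->|Hk1]; [lra|].
    assert (rad 1%nat < rad k) by (apply (rad_incr m u rad Hn); lia). lra.
  - destruct (Compare_dec.le_lt_dec k j) as [Hkj|Hkj].
    + destruct (Nat.eq_dec k j) as [->|Hne]; [lra|].
      assert (rad k < rad j) by (apply (rad_incr m u rad Hn); lia). lra.
    + destruct (Nat.eq_dec k (S j)) as [->|Hne]; [lra|].
      assert (rad (S j) < rad k) by (apply (rad_incr m u rad Hn); lia). lra.
Qed.

Definition sgn (x : R) : R := if Rlt_dec 0 x then 1 else -1.

Lemma sgn_prop x y : 0 < x * y -> (sgn x = 1 \/ sgn x = -1) /\ 0 < sgn x * y.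
Proof.
  intros H. unfold sgn. destruct (Rlt_dec 0 x) as [Hx|Hx].
  - split; [left; auto|]. nra.
  - split; [right; auto|]. assert (x < 0) by (destruct (Req_dec x 0) as [->|]; [lra|lra]). nra.
Qed.

Lemma region_sign N p u u1 u2 a b : radial_sol N p u u1 u2 -> b <= 0 ->
  (forall t, a < t < b -> u (exp t) <> 0) ->
  forall x0, a < x0 < b -> forall t, a < t < b -> 0 < vv p u x0 * vv p u t.
Proof.
  intros Hs Hb Hz x0 Hx0 t Ht.
  apply (const_sign (vv p u) a b).
  - intros x Hx. apply (dl_cont _ _ _ (dvv N p u u1 u2 x Hs ltac:(lra))).
  - intros x Hx. unfold vv. apply Rmult_integral_contrapositive. split.
    + apply Rgt_not_eq, exp_pos.
    + apply Hz; auto.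
  - auto.
  - auto.
Qed.

Lemma ln_lt x y : 0 < x -> x < y -> ln x < ln y.
Proof. apply ln_increasing. Qed.

Lemma ln_le0 x : 0 < x -> x <= 1 -> ln x <= 0.
Proof. intros. rewrite <- ln_1. destruct (Rle_lt_or_eq_dec _ _ H0) as [Hl| ->]; [left; apply ln_increasing; auto|lra]. Qed.

Lemma exp_in x a b : 0 < a -> 0 < b -> ln a < x < ln b -> a < exp x < b.
Proof.
  intros Ha Hb [H1 H2].
  split; [rewrite <- (exp_ln a) by auto|rewrite <- (exp_ln b) by auto]; apply exp_increasing; auto.
Qed.

Lemma stepJ N m p u u1 u2 rad s tau K1 K2 lo X sg j Y :
  (2 <= m)%nat -> 1 < p -> radial_sol N p u u1 u2 -> nodal_radii m u rad -> crit_points m u1 rad s ->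
  dyn (vv p u) (ww p u u1) (HH N p u u1) (Wd N p u u1) (AA N p) tau ->
  (1 <= j <= m - 1)%nat ->
  lo < X -> X < ln (rad j) -> tau <= X -> (sg = 1 \/ sg = -1) ->
  (forall t, lo < t < ln (rad j) -> 0 < sg * vv p u t) -> 0 < sg * ww p u u1 X ->
  X <= Y <= ln (s j) ->
  (forall t, X <= t <= Y -> Rabs (vv p u t) <= K1 /\ Rabs (ww p u u1 t) <= K2) ->
  HH N p u u1 Y <= HH N p u u1 X + 3 * (2 * AA N p * K1 * K2).
Proof.
  intros Hm Hp Hs Hn Hc Hdyn Hj Hlo HX Htau Hsg Hreg HwX HY Hbd.
  assert (Hrj := rad_pos m u rad Hm Hn j ltac:(lia)).
  assert (HrSj := rad_pos m u rad Hm Hn (S j) ltac:(lia)).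
  destruct (Hc j Hj) as [[Hs1 Hs2] [Hu1 _]].
  assert (Hz : forall t, ln (rad j) < t < ln (rad (S j)) -> u (exp t) <> 0).
  { intros t Ht. apply (zero_free m u rad Hm Hn j ltac:(lia)).
    - destruct (Nat.eq_dec j 0); [lia|]. apply (exp_in t (rad j) (rad (S j))); lra.
    - apply (exp_in t (rad j) (rad (S j))); lra. }
  assert (HSin : ln (rad j) < ln (s j) < ln (rad (S j))) by (split; apply ln_lt; lra).
  assert (HR2 : ln (rad (S j)) <= 0) by (apply ln_le0; lra).
  assert (Hsign := region_sign N p u u1 u2 _ _ Hs HR2 Hz (ln (s j)) HSin).
  assert (Hv0 : vv p u (ln (s j)) <> 0).
  { unfold vv. rewrite exp_ln by lra. apply Rmult_integral_contrapositive. split.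
    - apply Rgt_not_eq, exp_pos.
    - apply Hz in HSin. rewrite exp_ln in HSin by lra. auto. }
  assert (Hsq : 0 < vv p u (ln (s j)) * vv p u (ln (s j))).
  { destruct (Rlt_or_le 0 (vv p u (ln (s j)))); [nra|]. assert (vv p u (ln (s j)) < 0) by (destruct H; [auto|contradiction]). nra. }
  destruct (sgn_prop _ _ Hsq) as [Hsg' _].
  apply (step (vv p u) (ww p u u1) (HH N p u u1) (Wd N p u u1) (AA N p) tau K1 K2 (cc p)
          lo X (ln (rad j)) (ln (s j)) (ln (rad (S j))) sg (sgn (vv p u (ln (s j)))) Y); auto.
  - apply cc_pos; auto.
  - lra.
  - lra.
  - intros t Ht. apply (sgn_prop _ _ (Hsign t Ht)).
  - unfold vv. rewrite exp_ln by lra. destruct Hn as [_ [_ [Hzz _]]]. destruct (Hzz j Hj) as [_ ->]. ring.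
  - unfold ww, vv. rewrite exp_ln by lra. rewrite Hu1. ring.
Qed.

Lemma claim N m p u u1 u2 rad s i tau K1 K2 :
  (2 <= m)%nat -> 1 < p -> radial_sol N p u u1 u2 -> nodal_radii m u rad -> crit_points m u1 rad s ->
  (1 <= i <= m - 1)%nat ->
  dyn (vv p u) (ww p u u1) (HH N p u u1) (Wd N p u u1) (AA N p) tau ->
  tau < ln (rad 1%nat) -> 0 < ww p u u1 tau -> 0 < vv p u tau ->
  forall j, (1 <= j <= i)%nat -> forall Y, tau <= Y <= ln (s j) ->
  (forall t, tau <= t <= Y -> Rabs (vv p u t) <= K1 /\ Rabs (ww p u u1 t) <= K2) ->
  HH N p u u1 Y <= HH N p u u1 tau + 3 * INR j * (2 * AA N p * K1 * K2).
Proof.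
  intros Hm Hp Hs Hn Hc Hi Hdyn Htau Hw0 Hv0.
  assert (Hr1 := rad_pos m u rad Hm Hn 1 ltac:(lia)).
  induction j as [|j IH]; intros Hj Y HY Hbd; [lia|].
  destruct (Nat.eq_dec j 0) as [->|Hj0].
  -
    replace (3 * INR 1 * (2 * AA N p * K1 * K2)) with (3 * (2 * AA N p * K1 * K2)) by (simpl; ring).
    apply (stepJ N m p u u1 u2 rad s tau K1 K2 (tau - 1) tau 1 1 Y); auto; try lra; try lia.
    intros t Ht. rewrite Rmult_1_l.
    assert (Hz : forall t, tau - 1 < t < ln (rad 1%nat) -> u (exp t) <> 0).
    { intros t' Ht'. apply (zero_free m u rad Hm Hn 0 ltac:(lia)).
      - simpl. left; apply exp_pos.
      - rewrite <- (exp_ln (rad 1%nat)) by lra. apply exp_increasing; lra. }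
    assert (HR : ln (rad 1%nat) <= 0) by (apply ln_le0; lra).
    assert (Hpr := region_sign N p u u1 u2 _ _ Hs HR Hz tau ltac:(lra) t Ht). nra.
  -
    assert (Hdyn' := Hdyn). destruct Hdyn' as [_ [_ [_ [HA _]]]].
    assert (HD : 0 <= 2 * AA N p * K1 * K2).
    { destruct (Hbd tau ltac:(lra)) as [H1 H2].
      pose proof (Rabs_pos (vv p u tau)). pose proof (Rabs_pos (ww p u u1 tau)).
      assert (0 <= AA N p * K1) by (apply Rmult_le_pos; lra).
      assert (0 <= AA N p * K1 * K2) by (apply Rmult_le_pos; lra). lra. }
    rewrite S_INR.
    destruct (Hc j ltac:(lia)) as [[Hs1 Hs2] [Hu1 _]].
    destruct (Hc (S j) ltac:(lia)) as [[Hs1' Hs2'] _].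
    assert (Hrj := rad_pos m u rad Hm Hn j ltac:(lia)).
    assert (HrSj := rad_pos m u rad Hm Hn (S j) ltac:(lia)).
    assert (Hr1j : rad 1%nat <= rad j).
    { destruct (Nat.eq_dec j 1) as [->|]; [lra|left; apply (rad_incr m u rad Hn); lia]. }
    assert (HSj : ln (s j) < ln (rad (S j))) by (apply ln_lt; lra).
    assert (HSj2 : ln (rad (S j)) < ln (s (S j))) by (apply ln_lt; lra).
    assert (Htj : tau < ln (s j)).
    { assert (ln (rad 1%nat) <= ln (s j)).
      { left; apply ln_lt; lra. }
      lra. }
    destruct (Rle_or_lt Y (ln (s j))) as [HYs|HYs].
    + assert (HH N p u u1 Y <= HH N p u u1 tau + 3 * INR j * (2 * AA N p * K1 * K2))
        by (apply IH; [lia|lra|auto]).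
      lra.
    + assert (IHs : HH N p u u1 (ln (s j)) <= HH N p u u1 tau + 3 * INR j * (2 * AA N p * K1 * K2)).
      { apply IH; auto; try lia; try lra. intros t Ht. apply Hbd. lra. }
      assert (HR : ln (rad (S j)) <= 0) by (apply ln_le0; lra).
      assert (Hz : forall t, ln (rad j) < t < ln (rad (S j)) -> u (exp t) <> 0).
      { intros t Ht. apply (zero_free m u rad Hm Hn j ltac:(lia)).
        - destruct (Nat.eq_dec j 0); [lia|]. apply (exp_in t (rad j) (rad (S j))); lra.
        - apply (exp_in t (rad j) (rad (S j))); lra. }
      assert (HSin : ln (rad j) < ln (s j) < ln (rad (S j))) by (split; [apply ln_lt; lra|lra]).
      assert (Hsign := region_sign N p u u1 u2 _ _ Hs HR Hz (ln (s j)) HSin).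
      assert (Hsq := Hsign (ln (s j)) HSin).
      destruct (sgn_prop _ _ Hsq) as [Hsg Hsgv].
      assert (HStep : HH N p u u1 Y <= HH N p u u1 (ln (s j)) + 3 * (2 * AA N p * K1 * K2)).
      { apply (stepJ N m p u u1 u2 rad s tau K1 K2 (ln (rad j)) (ln (s j)) (sgn (vv p u (ln (s j)))) (S j) Y);
          auto; try lra; try lia.
        - intros t Ht. apply (sgn_prop _ _ (Hsign t Ht)).
        - replace (ww p u u1 (ln (s j))) with (cc p * vv p u (ln (s j)))
            by (unfold ww, vv; rewrite exp_ln by lra; rewrite Hu1; ring).
          assert (0 < cc p) by (apply cc_pos; auto). nra.
        - intros t Ht. apply Hbd. lra. }
      lra.
Qed.

Lemma core N m p u u1 u2 rad s i d P1 B0 :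
  (2 <= m)%nat -> 1 < p -> 0 < d -> d <= p - 1 -> p + 1 <= P1 -> 0 < AA N p -> 0 <= bb N p <= B0 ->
  radial_sol N p u u1 u2 -> nodal_radii m u rad -> crit_points m u1 rad s ->
  (1 <= i <= m - 1)%nat ->
  3 * INR m * (2 * AA N p * KK1 P1 B0 d * KK2 P1 B0 d) < 1/2 ->
  Fp p (vv p u (ln (s i))) <= 3 * INR m * (2 * AA N p * KK1 P1 B0 d * KK2 P1 B0 d).
Proof.
  intros Hm Hp Hd HdP HP1 HA Hb Hs Hn Hc Hi Hsmall.
  set (K1 := KK1 P1 B0 d) in *. set (K2 := KK2 P1 B0 d) in *.
  set (D := 2 * AA N p * K1 * K2) in *.
  assert (HK1 : 0 < K1) by (unfold K1, KK1; apply exp_pos).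
  assert (HK2 : 0 < K2) by (unfold K2, KK2; assert (0 <= KK1 P1 B0 d ^ 2) by nra; nra).
  assert (HD : 0 <= D) by (unfold D; assert (0 < AA N p * K1) by nra; nra).
  assert (Hr1 := rad_pos m u rad Hm Hn 1 ltac:(lia)).
  destruct (Hc i Hi) as [[Hs1 Hs2] [Hu1 _]].
  assert (Hri := rad_pos m u rad Hm Hn i ltac:(lia)).
  assert (HrSi := rad_pos m u rad Hm Hn (S i) ltac:(lia)).
  assert (HSi0 : ln (s i) < 0).
  { assert (s i < 1) by lra. rewrite <- ln_1. apply ln_lt; lra. }
  assert (Hu0 : 0 < u 0) by (destruct Hn; auto).
  assert (Hmi : INR i <= INR m) by (apply le_INR; lia).
  assert (HiD : 3 * INR i * D <= 3 * INR m * D) by nra.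
  assert (HT1 : ln (rad 1%nat) < 0).
  { destruct (Nat.eq_dec 1 m) as [He|Hne]; [lia|].
    assert (rad 1%nat < 1).
    { destruct Hn as [_ [_ [Hz _]]]. destruct (Hz 1%nat ltac:(lia)); lra. }
    rewrite <- ln_1. apply ln_lt; lra. }
  assert (Hri1 : rad 1%nat <= rad i).
  { destruct (Nat.eq_dec i 1) as [->|]; [lra|left; apply (rad_incr m u rad Hn); lia]. }
  assert (Hmain : forall eta, 0 < eta < 1/2 -> HH N p u u1 (ln (s i)) <= eta + 3 * INR i * D).
  { intros eta Heta.
    destruct (dyn_inst N p u u1 u2 Hp Hs Hu0 HA (proj1 Hb) eta (ln (rad 1%nat)) ltac:(lra) HT1)
      as [tau [Htau [HHtau [Hw0 [Hv0 [_ [_ Hdyn]]]]]]].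
    assert (Htau_s : tau < ln (s i)).
    { assert (ln (rad 1%nat) < ln (s i)) by (apply ln_lt; lra). lra. }
    assert (Hcl := claim N m p u u1 u2 rad s i tau K1 K2 Hm Hp Hs Hn Hc Hi Hdyn Htau Hw0 Hv0 i ltac:(lia)).
    assert (Hbds : forall Y, tau <= Y < 0 -> HH N p u u1 Y <= 1 ->
               forall t, tau <= t <= Y -> Rabs (vv p u t) <= K1 /\ Rabs (ww p u u1 t) <= K2).
    { intros Y HY HHY t Ht.
      apply (bounds_real p (bb N p) P1 B0 d); auto.
      split.
      - apply (H_nonneg N p u u1 u2); auto; lra.
      - apply Rle_trans with (HH N p u u1 Y); [apply (H_mono N p u u1 u2); auto; lra|auto]. }
    assert (HS1 : HH N p u u1 (ln (s i)) <= 1).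
    { destruct (Rle_or_lt (HH N p u u1 (ln (s i))) 1) as [|Hgt]; [auto|exfalso].
      destruct (ivt_gen (fun t => HH N p u u1 t - 1) tau (ln (s i)) ltac:(lra)) as [Y [HY HHY]].
      { intros x Hx. apply continuity_pt_minus; [|apply continuity_pt_const; intros a b; auto].
        apply (dl_cont _ _ _ (dHH N p u u1 u2 x Hp Hs ltac:(lra))). }
      { cbv beta. nra. }
      cbv beta in HHY.
      assert (HH N p u u1 Y <= HH N p u u1 tau + 3 * INR i * D).
      { apply Hcl; [lra|]. apply (Hbds Y); lra. }
      lra. }
    assert (HH N p u u1 (ln (s i)) <= HH N p u u1 tau + 3 * INR i * D).
    { apply Hcl; [lra|]. apply (Hbds (ln (s i))); lra. }
    lra. }
  assert (HHs : HH N p u u1 (ln (s i)) <= 3 * INR i * D).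
  { destruct (Rle_or_lt (HH N p u u1 (ln (s i))) (3 * INR i * D)) as [|Hgt]; [auto|exfalso].
    set (e := Rmin ((HH N p u u1 (ln (s i)) - 3 * INR i * D) / 2) (1/4)).
    assert (0 < e) by (unfold e; apply Rmin_pos; lra).
    assert (e <= (HH N p u u1 (ln (s i)) - 3 * INR i * D) / 2) by (unfold e; apply Rmin_l).
    assert (e <= 1/4) by (unfold e; apply Rmin_r).
    assert (Hm' := Hmain e ltac:(lra)). lra. }
  assert (Hww : ww p u u1 (ln (s i)) = cc p * vv p u (ln (s i)))
    by (unfold ww, vv; rewrite exp_ln by lra; rewrite Hu1; ring).
  unfold HH in HHs. rewrite Hww in HHs.
  assert (Hcb : cc p ^ 2 - bb N p = cc p * AA N p) by (unfold bb, AA; ring).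
  assert (0 <= cc p * AA N p) by (apply Rmult_le_pos; [left; apply cc_pos|]; lra).
  assert (0 <= (cc p ^2 - bb N p) * vv p u (ln (s i)) ^ 2) by (rewrite Hcb; apply Rmult_le_pos; nra).
  assert ((cc p * vv p u (ln (s i))) ^ 2 / 2 - bb N p * vv p u (ln (s i)) ^ 2 / 2 =
          (cc p ^2 - bb N p) * vv p u (ln (s i)) ^ 2 / 2) by field.
  lra.
Qed.

Lemma target_form p u sv : 1 < p -> 0 < sv -> u sv <> 0 ->
  sv * Rpower (Rabs (u sv)) ((p - 1) / 2) = exp ((p-1)/2 * ln (Rabs (vv p u (ln sv)))).
Proof.
  intros Hp Hs Hu. unfold vv, Rpower. rewrite exp_ln by auto.
  rewrite Rabs_mult, (Rabs_right (exp _)) by (left; apply exp_pos).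
  rewrite ln_mult by (try apply exp_pos; apply Rabs_pos_lt; auto).
  rewrite ln_exp.
  replace ((p - 1) / 2 * (cc p * ln sv + ln (Rabs (u sv)))) with (ln sv + (p-1)/2 * ln (Rabs (u sv)))
    by (unfold cc; field; lra).
  rewrite exp_plus, exp_ln by auto. ring.
Qed.

Lemma small_from_F p V X e0 eps : 1 < p -> V <> 0 -> 0 < X < 1 -> 0 < e0 ->
  e0 <= (p - 1) / (2 * (p + 1)) -> X < exp (ln eps / e0) -> 0 < eps ->
  (p + 1) * Fp p V <= X ->
  exp ((p-1)/2 * ln (Rabs V)) < eps.
Proof.
  intros Hp HV HX He0 He0p HXe Heps HF.
  rewrite Fp_form in HF by auto.
  assert (HVV : V * V = exp (2 * ln (Rabs V))).
  { replace (2 * ln (Rabs V)) with (ln (Rabs V) + ln (Rabs V)) by ring.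
    rewrite exp_plus, exp_ln by (apply Rabs_pos_lt; auto). rewrite <- Rabs_mult. rewrite Rabs_right; nra. }
  rewrite HVV, <- exp_plus in HF.
  replace ((p + 1) * (exp ((p - 1) * ln (Rabs V) + 2 * ln (Rabs V)) / (p + 1))) with
    (exp ((p+1) * ln (Rabs V))) in HF by (replace ((p - 1) * ln (Rabs V) + 2 * ln (Rabs V)) with ((p+1) * ln (Rabs V)) by ring; field; lra).
  assert (Hl : (p+1) * ln (Rabs V) <= ln X).
  { rewrite <- (ln_exp ((p+1) * ln (Rabs V))).
    destruct (Rle_lt_or_eq_dec _ _ HF) as [Hlt|Heq]; [left; apply ln_increasing; [apply exp_pos|auto]|rewrite Heq; lra]. }
  assert (HlnX : ln X < 0) by (rewrite <- ln_1; apply ln_increasing; lra).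
  assert (HlnXe : ln X < ln eps / e0).
  { rewrite <- (ln_exp (ln eps / e0)). apply ln_increasing; lra. }
  assert (Hq : (p-1)/2 * ln (Rabs V) <= (p - 1) / (2 * (p + 1)) * ln X).
  { replace ((p - 1) / (2 * (p + 1)) * ln X) with ((p-1)/2 * (ln X / (p+1))) by (field; lra).
    apply Rmult_le_compat_l; [lra|].
    apply (Rmult_le_reg_l (p+1)); [lra|]. replace ((p + 1) * (ln X / (p + 1))) with (ln X) by (field; lra). lra. }
  assert (Hq2 : (p - 1) / (2 * (p + 1)) * ln X <= e0 * ln X) by nra.
  assert (Hq3 : e0 * ln X < ln eps).
  { assert (e0 * ln X < e0 * (ln eps / e0)) by (apply Rmult_lt_compat_l; lra).
    replace (e0 * (ln eps / e0)) with (ln eps) in H by (field; lra). lra. }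
  rewrite <- (exp_ln eps) by auto.
  apply exp_increasing. lra.
Qed.

Theorem mainTheorem10 (N m : nat) (HN : (3 <= N)%nat) (Hm : (2 <= m)%nat)
  (u u1 u2 : R -> R -> R) (rad s : R -> nat -> R)
  (Hu : forall p, 1 < p < pS N ->
     radial_sol N p (u p) (u1 p) (u2 p) /\
     nodal_radii m (u p) (rad p) /\
     crit_points m (u1 p) (rad p) (s p)) :
  forall i, (1 <= i <= m - 1)%nat ->
    tends_to_0_left (fun p => s p i * Rpower (Rabs (u p (s p i))) ((p - 1) / 2)) (pS N) /\
    tends_to_0_left (fun p => rad p i * Rpower (Rabs (u p (s p i))) ((p - 1) / 2)) (pS N).
Proof.
  intros i Hi.
  set (n := INR N).
  assert (Hn3 : 3 <= n) by (unfold n; replace 3 with (INR 3) by (simpl; ring); apply le_INR; lia).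
  assert (HpS : pS N - 1 = 4 / (n - 2)) by (unfold pS; fold n; field; lra).
  assert (HpS0 : 0 < 4 / (n - 2)) by (apply Rdiv_lt_0_compat; lra).
  set (d := 3 * (pS N - 1) / 4).
  set (P1 := pS N + 1).
  set (B0 := (n - 2)^2 / 4).
  set (K1 := KK1 P1 B0 d). set (K2 := KK2 P1 B0 d).
  assert (HK1 : 0 < K1) by (unfold K1, KK1; apply exp_pos).
  assert (HK2 : 0 < K2) by (unfold K2, KK2; assert (0 <= KK1 P1 B0 d ^ 2) by nra; unfold B0; nra).
  assert (Hmpos : 0 < INR m) by (apply lt_0_INR; lia).
  set (C := 3 * INR m * 2 * K1 * K2).
  assert (HC : 0 < C) by (unfold C; repeat apply Rmult_lt_0_compat; lra).
  assert (Hd : 0 < d) by (unfold d; lra).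
  assert (HP1 : 0 < P1) by (unfold P1; lra).
  set (e0 := d / (2 * P1)).
  assert (He0 : 0 < e0) by (unfold e0; apply Rdiv_lt_0_compat; lra).
  assert (Key : forall eps, 0 < eps -> exists delta, 0 < delta /\ forall p, 1 < p -> pS N - delta < p < pS N ->
            0 < s p i * Rpower (Rabs (u p (s p i))) ((p - 1) / 2) < eps /\
            0 < rad p i * Rpower (Rabs (u p (s p i))) ((p - 1) / 2) < eps).
  { intros eps Heps.
    set (theta := Rmin 1 (exp (ln eps / e0))).
    assert (Hth : 0 < theta) by (unfold theta; apply Rmin_pos; [lra|apply exp_pos]).
    set (eta := Rmin (theta / 2 / (P1 * C)) (1 / (4 * C))).
    assert (Heta : 0 < eta).
    { unfold eta. apply Rmin_pos; apply Rdiv_lt_0_compat; try lra; nra. }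
    assert (Hq : 4 / (n - 2 + eta) < 4 / (n - 2)).
    { apply Rmult_lt_compat_l; [lra|]. apply Rinv_lt_contravar; nra. }
    set (delta := Rmin ((pS N - 1) / 4) (pS N - 1 - 4 / (n - 2 + eta))).
    exists delta. split; [unfold delta; apply Rmin_pos; lra|].
    intros p Hp Hpr.
    assert (Hd1 : delta <= (pS N - 1) / 4) by (unfold delta; apply Rmin_l).
    assert (Hd2 : delta <= pS N - 1 - 4 / (n - 2 + eta)) by (unfold delta; apply Rmin_r).
    destruct (Hu p ltac:(lra)) as [Hs [Hnod Hcr]].
    assert (Hdp : d <= p - 1) by (unfold d; lra).
    assert (HP1p : p + 1 <= P1) by (unfold P1; lra).
    assert (Hcc : cc p = 2 / (p - 1)) by reflexivity.
    assert (HAAe : AA N p = 4 / (p - 1) + 2 - n) by (unfold AA; fold n; rewrite Hcc; field; lra).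
    assert (HApos : 0 < AA N p).
    { rewrite HAAe.
      assert (4 / (pS N - 1) < 4 / (p - 1)).
      { apply Rmult_lt_compat_l; [lra|]. apply Rinv_lt_contravar; [nra|lra]. }
      assert (4 / (pS N - 1) = n - 2) by (rewrite HpS; field; lra).
      lra. }
    assert (HAsmall : AA N p < eta).
    { rewrite HAAe.
      assert (Hp1 : 4 / (n - 2 + eta) < p - 1) by lra.
      assert (4 / (p - 1) < n - 2 + eta).
      { apply (Rmult_lt_reg_r (p - 1)); [lra|].
        replace (4 / (p - 1) * (p - 1)) with 4 by (field; lra).
        apply (Rmult_lt_compat_l (n - 2 + eta)) in Hp1; [|lra].
        replace ((n - 2 + eta) * (4 / (n - 2 + eta))) with 4 in Hp1 by (field; lra). lra. }
      lra. }
    assert (Hbb : 0 <= bb N p <= B0).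
    { unfold bb, B0. fold n. rewrite Hcc. split.
      - apply Rmult_le_pos; [left; apply Rdiv_lt_0_compat; lra|].
        assert (2 / (p - 1) < n - 2).
        { apply (Rmult_lt_reg_r (p - 1)); [lra|].
          replace (2 / (p - 1) * (p - 1)) with 2 by (field; lra).
          assert (p - 1 > 3 / (n - 2)) by (unfold d in Hdp; rewrite HpS in Hdp; lra).
          apply (Rmult_gt_compat_l (n - 2)) in H; [|lra].
          replace ((n - 2) * (3 / (n - 2))) with 3 in H by (field; lra). nra. }
        lra.
      - set (c := 2 / (p - 1)). assert ((n - 2) ^ 2 / 4 - c * (n - 2 - c) = (c - (n-2)/2)^2) by field. assert (0 <= (c - (n-2)/2)^2) by (apply pow2_ge_0). lra. }
    assert (HAeta1 : C * AA N p < 1/4).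
    { assert (eta <= 1 / (4 * C)) by (unfold eta; apply Rmin_r).
      assert (C * AA N p < C * eta) by (apply Rmult_lt_compat_l; lra).
      assert (C * eta <= C * (1 / (4 * C))) by (apply Rmult_le_compat_l; lra).
      replace (C * (1 / (4 * C))) with (1/4) in H1 by (field; lra). lra. }
    assert (HAeta2 : P1 * C * AA N p < theta).
    { assert (eta <= theta / 2 / (P1 * C)) by (unfold eta; apply Rmin_l).
      assert (P1 * C * AA N p < P1 * C * eta) by (apply Rmult_lt_compat_l; nra).
      assert (P1 * C * eta <= P1 * C * (theta / 2 / (P1 * C))) by (apply Rmult_le_compat_l; nra).
      replace (P1 * C * (theta / 2 / (P1 * C))) with (theta / 2) in H1 by (field; nra). lra. }
    assert (Hcore := core N m p (u p) (u1 p) (u2 p) (rad p) (s p) i d P1 B0 Hm Hp Hd Hdp HP1p HApos Hbb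
                       Hs Hnod Hcr Hi).
    fold K1 K2 in Hcore.
    assert (HF : Fp p (vv p (u p) (ln (s p i))) <= C * AA N p).
    { replace (C * AA N p) with (3 * INR m * (2 * AA N p * K1 * K2)) by (unfold C; ring).
      apply Hcore. replace (3 * INR m * (2 * AA N p * K1 * K2)) with (C * AA N p) by (unfold C; ring). lra. }
    destruct (Hcr i Hi) as [[Hs1 Hs2] _].
    assert (Hri := rad_pos m (u p) (rad p) Hm Hnod i ltac:(lia)).
    assert (HrSi := rad_pos m (u p) (rad p) Hm Hnod (S i) ltac:(lia)).
    assert (Husi : u p (s p i) <> 0).
    { apply (zero_free m (u p) (rad p) Hm Hnod i ltac:(lia)); [|lra].
      destruct (Nat.eq_dec i 0); [lia|lra]. }
    assert (HV : vv p (u p) (ln (s p i)) <> 0).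
    { unfold vv. rewrite exp_ln by lra. apply Rmult_integral_contrapositive. split; [apply Rgt_not_eq, exp_pos|auto]. }
    assert (Htf := target_form p (u p) (s p i) Hp ltac:(lra) Husi).
    set (X := P1 * C * AA N p).
    assert (HX : 0 < X < 1).
    { split; [unfold X; repeat apply Rmult_lt_0_compat; lra|].
      assert (theta <= 1) by (unfold theta; apply Rmin_l). unfold X; lra. }
    assert (HXe : X < exp (ln eps / e0)).
    { assert (theta <= exp (ln eps / e0)) by (unfold theta; apply Rmin_r). unfold X; lra. }
    assert (He0p : e0 <= (p - 1) / (2 * (p + 1))).
    { unfold e0. unfold Rdiv. apply Rmult_le_compat; try lra.
      - left; apply Rinv_0_lt_compat; lra.
      - apply Rinv_le_contravar; lra. }
    assert (HFX : (p + 1) * Fp p (vv p (u p) (ln (s p i))) <= X).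
    { assert (0 <= Fp p (vv p (u p) (ln (s p i)))) by (apply Fp_nonneg; lra).
      apply Rle_trans with (P1 * Fp p (vv p (u p) (ln (s p i)))); [apply Rmult_le_compat_r; lra|].
      unfold X. rewrite Rmult_assoc. apply Rmult_le_compat_l; lra. }
    assert (Hsm := small_from_F p _ X e0 eps Hp HV HX He0 He0p HXe Heps HFX).
    rewrite <- Htf in Hsm.
    assert (HRp : 0 < Rpower (Rabs (u p (s p i))) ((p - 1) / 2)) by (unfold Rpower; apply exp_pos).
    assert (0 < rad p i * Rpower (Rabs (u p (s p i))) ((p - 1) / 2)) by (apply Rmult_lt_0_compat; lra).
    assert (rad p i * Rpower (Rabs (u p (s p i))) ((p - 1) / 2) < s p i * Rpower (Rabs (u p (s p i))) ((p - 1) / 2))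
      by (apply Rmult_lt_compat_r; lra).
    split; split; lra. }
  split.
  - intros eps Heps. destruct (Key eps Heps) as [delta [Hdel Hk]].
    exists delta. split; [auto|]. intros p Hp Hpr. destruct (Hk p Hp Hpr) as [[H1 H2] _].
    rewrite Rabs_right; lra.
  - intros eps Heps. destruct (Key eps Heps) as [delta [Hdel Hk]].
    exists delta. split; [auto|]. intros p Hp Hpr. destruct (Hk p Hp Hpr) as [_ [H1 H2]].
    rewrite Rabs_right; lra.
Qed.
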